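(* Let $f:[0,+\infty)\to[0,1]$ be defined by $f(u\tanh u)=u^{-1}\tanh u$ for $u>0$ and $f(0)=1$. Then for every fixed $\alpha>0$ the function $\phi(t)=t\,\alpha\, f(t/\alpha)$, $t>0$, is differentiable and monotone increasing, and $\phi(t)\to\alpha^2$ as $t\to+\infty$. *)

(* Defs.v *)
From Stdlib Require Import Reals.
From Coquelicot Require Import Coquelicot.
Open Scope R_scope.

(* [is_f f] : f is the function of the paper, f(u tanh u) = tanh u / u for
   u > 0 and f(0) = 1.  (Stdlib's [tanh x = sinh x / cosh x].)  Since
   u |-> u tanh u is a bijection of (0,+oo), this determines f on [0,+oo). *)
Definition is_f (f : R -> R) : Prop :=
  f 0 = 1 /\ (forall u : R, 0 < u -> f (u * tanh u) = tanh u / u).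

Definition phi (f : R -> R) (alpha : R) (t : R) : R := t * alpha * f (t / alpha).

(* Main.v *)
Require Import Defs.
From Stdlib Require Import Reals Lra ClassicalEpsilon Ranalysis5.
From Coquelicot Require Import Coquelicot.
Open Scope R_scope.

Definition T (u : R) := (exp (2*u) - 1) / (exp (2*u) + 1).

Lemma tanh_T u : tanh u = T u.
Proof.
  unfold tanh, sinh, cosh, T.
  assert (H1 : exp (2*u) = exp u * exp u) by (rewrite <- exp_plus; f_equal; ring).
  rewrite H1, exp_Ropp.
  assert (Hp := exp_pos u).
  field; split; nra.
Qed.

Lemma T_alt u : T u = 1 - 2 / (exp (2*u) + 1).
Proof. unfold T. assert (Hp := exp_pos (2*u)). field. lra. Qed.

Lemma T_incr x y : x < y -> T x < T y.
Proof.
  intro H. rewrite !T_alt.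
  assert (Hx := exp_pos (2*x)). assert (Hxy : exp (2*x) < exp (2*y)) by (apply exp_increasing; lra).
  assert (2 / (exp (2*y) + 1) < 2 / (exp (2*x) + 1)).
  { apply Rmult_lt_compat_l; [lra|]. apply Rinv_lt_contravar; nra. }
  lra.
Qed.

Lemma T_0 : T 0 = 0.
Proof. unfold T. rewrite Rmult_0_r, exp_0. field. Qed.

Lemma T_lt1 u : T u < 1.
Proof. rewrite T_alt. assert (Hx := exp_pos (2*u)).
  assert (0 < 2 / (exp (2*u) + 1)) by (apply Rdiv_lt_0_compat; lra). lra. Qed.

Lemma T_pos u : 0 < u -> 0 < T u.
Proof. intro; rewrite <- T_0; apply T_incr; auto. Qed.

Definition g (u : R) := u * T u.

Lemma g_incr x y : 0 <= x -> x < y -> g x < g y.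
Proof.
  intros H0 H. unfold g.
  assert (T x < T y) by (apply T_incr; auto).
  assert (0 <= T x) by (destruct (Req_dec x 0); [subst; rewrite T_0; lra| apply Rlt_le, T_pos; lra]).
  nra.
Qed.

Lemma g_0 : g 0 = 0.
Proof. unfold g; ring. Qed.

Lemma g_big u : 0 <= u -> u - 1 <= g u.
Proof.
  intro H. unfold g. rewrite T_alt.
  assert (He : 1 + 2*u <= exp (2*u)).
  { destruct (Req_dec u 0). subst. rewrite Rmult_0_r, exp_0. lra.
    apply Rlt_le, exp_ineq1. lra. }
  assert (u * (2 / (exp (2*u) + 1)) <= 1).
  { unfold Rdiv. rewrite <- Rmult_assoc. apply (Rmult_le_reg_r (exp (2*u) + 1)). lra.
    rewrite Rmult_assoc, Rinv_l by lra. lra. }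
  lra.
Qed.

Lemma T_derive u : is_derive T u (4 * exp (2*u) / (exp (2*u) + 1)^2).
Proof.
  unfold T. assert (Hp := exp_pos (2*u)).
  auto_derive. lra. field. lra.
Qed.

Lemma g_derive u : is_derive g u (T u + u * (4 * exp (2*u) / (exp (2*u) + 1)^2)).
Proof.
  unfold g. apply (is_derive_ext (fun u => u * T u)). reflexivity.
  evar (l : R). replace (T u + _) with l.
  apply (is_derive_mult (fun x => x) T). apply is_derive_id. apply T_derive.
  intros; apply Rmult_comm. unfold l. simpl. unfold plus, mult, one; simpl. ring.
Qed.

Lemma g_cont : continuity g.
Proof.
  intro x. apply derivable_continuous_pt. apply ex_derive_Reals_0.
  eexists; apply g_derive.
Qed.

Lemma g_exists y : 0 <= y -> exists u, 0 <= u /\ g u = y.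
Proof.
  intro Hy. destruct (Req_dec y 0) as [->|Hy0].
  - exists 0. split; [lra| apply g_0].
  - destruct (IVT (fun u => g u - y) 0 (y+2)) as [z [Hz1 Hz2]].
    + intro x. apply continuity_pt_minus. apply g_cont. apply continuity_pt_const. intros a b; auto.
    + lra.
    + rewrite g_0; lra.
    + assert (H := g_big (y+2)). lra.
    + exists z. split; lra.
Qed.

Definition h (y : R) : R := epsilon (inhabits 0) (fun u => 0 <= u /\ g u = y).

Lemma h_spec y : 0 <= y -> 0 <= h y /\ g (h y) = y.
Proof. intro Hy. unfold h. apply epsilon_spec. apply g_exists; auto. Qed.

Lemma g_inj x y : 0 <= x -> 0 <= y -> g x = g y -> x = y.
Proof.
  intros Hx Hy E. destruct (Rtotal_order x y) as [H|[H|H]]; auto.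
  apply g_incr in H; auto; lra. apply g_incr in H; auto; lra.
Qed.

Lemma h_g u : 0 <= u -> h (g u) = u.
Proof.
  intro Hu. assert (0 <= g u) by (rewrite <- g_0; destruct (Req_dec u 0); [subst; lra| apply Rlt_le, g_incr; lra]).
  destruct (h_spec (g u) H). apply g_inj; auto.
Qed.

Lemma h_le a b : 0 <= a -> a <= b -> h a <= h b.
Proof.
  intros Ha Hab. destruct (h_spec a Ha) as [A1 A2]. destruct (h_spec b ltac:(lra)) as [B1 B2].
  destruct (Rle_lt_dec (h a) (h b)); auto.
  apply g_incr in r; auto. lra.
Qed.

Lemma h_pos y : 0 < y -> 0 < h y.
Proof.
  intro Hy. destruct (h_spec y ltac:(lra)) as [A1 A2].
  destruct (Req_dec (h y) 0) as [E|E]; [rewrite E, g_0 in A2; lra| lra].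
Qed.

Lemma g_der_pt a : derivable_pt g a.
Proof. apply ex_derive_Reals_0. eexists; apply g_derive. Qed.

Lemma h_derivable y : 0 < y -> derivable_pt h y.
Proof.
  intro Hy. set (ub := h y + 1).
  destruct (h_spec y ltac:(lra)) as [H1 H2].
  assert (Hhp := h_pos y Hy).
  assert (Hgub : y < g ub) by (rewrite <- H2; apply g_incr; unfold ub; lra).
  assert (x_encad : g 0 < y < g ub) by (rewrite g_0; lra).
  assert (f_eq_g : forall x, g 0 <= x -> x <= g ub -> comp g h x = id x).
  { intros x Ha Hb. rewrite g_0 in Ha. unfold comp, id. apply h_spec; auto. }
  assert (g_wf : forall x, g 0 <= x -> x <= g ub -> 0 <= h x <= ub).
  { intros x Ha Hb. rewrite g_0 in Ha. split. apply h_spec; auto.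
    rewrite <- (h_g ub) by (unfold ub; lra). apply h_le; auto. }
  assert (f_incr : forall x y, 0 <= x -> x < y -> y <= ub -> g x < g y).
  { intros; apply g_incr; auto. }
  assert (f_der : forall a, 0 <= a <= ub -> derivable_pt g a) by (intros; apply g_der_pt).
  assert (Hlt : 0 < ub) by (unfold ub; lra).
  apply (derivable_pt_recip_interv g h 0 ub y Hlt x_encad f_eq_g g_wf f_incr f_der).
  set (pr := derivable_pt_recip_interv_prelim1 _ _ _ _ _ _ _ _ _).
  rewrite (derive_pt_eq_0 _ _ _ pr (proj1 (is_derive_Reals _ _ _) (g_derive (h y)))).
  assert (0 < T (h y)) by (apply T_pos; auto).
  assert (Hp := exp_pos (2 * h y)).
  assert (0 < 4 * exp (2 * h y) / (exp (2 * h y) + 1) ^ 2) by (apply Rdiv_lt_0_compat; [lra| apply pow_lt; lra]).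
  nra.
Qed.

Lemma phi_eq f alpha t : is_f f -> 0 < alpha -> 0 < t ->
  phi f alpha t = alpha^2 * (T (h (t/alpha)))^2.
Proof.
  intros [_ Hf] Ha Ht. assert (Hy : 0 < t/alpha) by (apply Rdiv_lt_0_compat; auto).
  destruct (h_spec _ (Rlt_le _ _ Hy)) as [_ H2]. assert (Hu := h_pos _ Hy).
  set (u := h (t/alpha)) in *. unfold phi.
  assert (Ht' : t = alpha * g u) by (rewrite H2; field; lra).
  rewrite <- H2. unfold g. rewrite <- tanh_T, Hf, tanh_T by auto. rewrite Ht'. unfold g. field. lra.
Qed.

Theorem proposition3p5 (f : R -> R) (Hf : is_f f) (alpha : R) (Ha : 0 < alpha) :
  (forall t : R, 0 < t -> ex_derive (phi f alpha) t) /\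
  (forall s t : R, 0 < s -> s <= t -> phi f alpha s <= phi f alpha t) /\
  is_lim (phi f alpha) p_infty (alpha ^ 2).
Proof.
  split; [|split].
  - intros t Ht. apply (ex_derive_ext_loc (fun t => alpha^2 * (T (h (t/alpha)))^2)).
    + exists (mkposreal t Ht). intros y Hy. simpl in Hy. unfold ball in Hy; simpl in Hy.
      unfold AbsRing_ball, abs, minus, plus, opp in Hy; simpl in Hy.
      apply Rabs_lt_between in Hy.
      symmetry. apply phi_eq; auto. lra.
    + apply ex_derive_mult. apply ex_derive_const.
      apply ex_derive_pow.
      apply (ex_derive_comp T (fun t => h (t/alpha))).
      * eexists; apply T_derive.
      * apply (ex_derive_comp h (fun t => t/alpha)).
        -- apply ex_derive_Reals_1, h_derivable. apply Rdiv_lt_0_compat; auto.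
        -- auto_derive. lra.
  - intros s t Hs Hst. rewrite !phi_eq by (auto; lra).
    assert (Hy : 0 < s/alpha) by (apply Rdiv_lt_0_compat; auto).
    assert (s / alpha <= t / alpha) by (apply Rmult_le_compat_r; [apply Rlt_le, Rinv_0_lt_compat|]; lra).
    assert (h (s/alpha) <= h (t/alpha)) by (apply h_le; lra).
    assert (0 < T (h (s/alpha))) by (apply T_pos, h_pos; auto).
    assert (T (h (s/alpha)) <= T (h (t/alpha))).
    { destruct (Req_dec (h (s/alpha)) (h (t/alpha))) as [E|E]; [rewrite E; lra|].
      apply Rlt_le, T_incr; lra. }
    assert (0 < alpha^2) by (apply pow_lt; auto).
    apply Rmult_le_compat_l; [lra|]. simpl. nra.
  - apply is_lim_spec. intros eps. simpl.
    set (U := 2 * alpha^2 / eps).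
    assert (Hap : 0 < alpha^2) by (apply pow_lt; auto).
    assert (HU : 0 < U) by (apply Rdiv_lt_0_compat; [lra| apply cond_pos]).
    exists (alpha * g U). intros t Ht.
    assert (Hgu : 0 < g U) by (rewrite <- g_0; apply g_incr; lra).
    assert (Htp : 0 < t) by nra.
    rewrite phi_eq by auto.
    assert (Hy : 0 < t/alpha) by (apply Rdiv_lt_0_compat; auto).
    set (u := h (t/alpha)).
    assert (HuU : U < u).
    { destruct (h_spec _ (Rlt_le _ _ Hy)) as [A1 A2]. fold u in A1, A2.
      destruct (Rle_lt_dec u U) as [r|r]; auto.
      assert (g u <= g U).
      { destruct (Req_dec u U) as [E|E]; [rewrite E; lra|]. apply Rlt_le, g_incr; lra. }
      assert (t / alpha > g U). { apply (Rmult_lt_reg_l alpha); auto. field_simplify; lra. }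
      lra. }
    assert (HTu := T_lt1 u). assert (HTU : T U < T u) by (apply T_incr; auto).
    assert (HTUp := T_pos U HU).
    assert (HE : 1 + 2*U < exp (2*U)) by (apply exp_ineq1; lra).
    assert (Hb : 1 - T U < eps / (2 * alpha^2)).
    { rewrite T_alt. assert (2 / (exp (2*U) + 1) < 2 / (2*U)).
      { apply Rmult_lt_compat_l; [lra|]. apply Rinv_lt_contravar; nra. }
      replace (2 / (2*U)) with (eps / (2*alpha^2)) in H by (unfold U; field; split; [apply Rgt_not_eq, cond_pos| lra]).
      lra. }
    assert (Hb2 : 2 * alpha^2 * (1 - T U) < eps).
    { replace (pos eps) with (2 * alpha^2 * (eps / (2*alpha^2))) by (field; lra).
      apply Rmult_lt_compat_l; lra. }
    assert (Hk : (1 - T u) * (1 + T u) <= 2 * (1 - T u)) by nra.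
    assert (Hk2 : alpha^2 * ((1 - T u) * (1 + T u)) <= alpha^2 * (2 * (1 - T u))) by (apply Rmult_le_compat_l; lra).
    assert (Hk3 : alpha^2 * (1 - T u) < alpha^2 * (1 - T U)) by (apply Rmult_lt_compat_l; lra).
    assert (0 < alpha^2 * ((1 - T u) * (1 + T u))) by (apply Rmult_lt_0_compat; nra).
    rewrite Rabs_left1 by nra. nra.
Qed.
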